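(* Let $\mathscr G=(\mathscr V,\mathscr E)$ be a finite connected graph with $N$ vertices and $M\ge0$ an integer. The unique stationary distribution $\pi_X$ of the uniform reshuffling model on $\mathscr C_{N,M}$ is the uniform distribution on $\mathscr C_{N,M}$.
   Context: $\mathscr C_{N,M}$ is the set of maps $\xi:\mathscr V\to\mathbb N$ with $\sum_x\xi(x)=M$. The uniform reshuffling model is the discrete-time Markov chain on $\mathscr C_{N,M}$: at each step an edge $(x,y)\in\mathscr E$ is chosen uniformly at random, $U$ is drawn uniformly from $\{0,1,\dots,X_t(x)+X_t(y)\}$, and $X_{t+1}(x)=U$, $X_{t+1}(y)=X_t(x)+X_t(y)-U$, $X_{t+1}(z)=X_t(z)$ for $z\notin\{x,y\}$. This chain has a unique stationary distribution, denoted $\pi_X$. *)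

(* Defs.v *)
From mathcomp Require Import all_boot all_order all_algebra.
Set Implicit Arguments. Unset Strict Implicit. Unset Printing Implicit Defensive.
Import Order.TTheory GRing.Theory Num.Theory.
Local Open Scope ring_scope.

(* Configurations C_{N,M}: maps xi : V -> nat with sum M.  Since every value
   is then <= M, we encode xi as a finite function V -> 'I_(M.+1). *)
Definition config_pred (V : finType) (M : nat) : pred {ffun V -> 'I_M.+1} :=
  fun xi => (\sum_(x : V) (xi x : nat) == M)%N.
Definition config (V : finType) (M : nat) : finType :=
  {xi : {ffun V -> 'I_M.+1} | @config_pred V M xi}.

Definition cval (V : finType) (M : nat) (xi : config V M) (x : V) : nat :=
  nat_of_ord (sval xi x).

Definition edges (V : finType) (e : rel V) : {set V * V} :=
  [set p : V * V | e p.1 p.2].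

(* Transition probability of the uniform reshuffling model: choose an edge
   (x,y) uniformly, then a uniform U in {0,...,xi x + xi y}, set
   eta x = U, eta y = xi x + xi y - U, other coordinates unchanged. *)
Definition reshuffle_P (R : realFieldType) (V : finType) (e : rel V) (M : nat)
    (xi eta : config V M) : R :=
  (#|edges e|%:R)^-1 *
  \sum_(p in edges e)
     (if [forall z : V, ((z != p.1) && (z != p.2)) ==> (cval eta z == cval xi z)]
         && (cval eta p.1 + cval eta p.2 == cval xi p.1 + cval xi p.2)%N
      then ((cval xi p.1 + cval xi p.2).+1%:R)^-1 else 0).

Definition is_distr (R : realFieldType) (T : finType) (pi : T -> R) : Prop :=
  (forall t, 0 <= pi t) /\ \sum_(t : T) pi t = 1.

Definition is_stationary (R : realFieldType) (V : finType) (e : rel V) (M : nat)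
    (pi : config V M -> R) : Prop :=
  forall eta : config V M, \sum_(xi : config V M) pi xi * reshuffle_P R e xi eta = pi eta.

Definition uniform_distr (R : realFieldType) (T : finType) : T -> R :=
  fun _ => (#|T|%:R)^-1.
Arguments reshuffle_P R [V] e [M] xi eta.
Arguments is_stationary R [V] e [M] pi.
Arguments is_distr R [T] pi.
Arguments uniform_distr R T _ : clear implicits.

(* Main.v *)
Require Import Defs.
From mathcomp Require Import all_boot all_order all_algebra.
From mathcomp Require Import zify ring lra.
Import Order.TTheory GRing.Theory Num.Theory.
Local Open Scope ring_scope.
Set Implicit Arguments. Unset Strict Implicit.

Lemma cval_inj (V : finType) (M : nat) (a b : config V M) :
  (forall z, cval a z = cval b z) -> a = b.
Proof.
move=> h; apply: val_inj; apply/ffunP => z; apply: val_inj; exact: h.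
Qed.

Lemma cval_sum (V : finType) (M : nat) (a : config V M) : (\sum_z cval a z)%N = M.
Proof. by case: a => f hf; rewrite /cval /=; apply/eqP. Qed.

Lemma cval_le (V : finType) (M : nat) (a : config V M) z : (cval a z <= M)%N.
Proof. rewrite /cval; have := ltn_ord (sval a z); lia. Qed.

Lemma cval_exists (V : finType) (M : nat) (f : V -> nat) :
  (\sum_z f z)%N = M -> {a : config V M | forall z, cval a z = f z}.
Proof.
move=> hs.
have hle : forall z, (f z < M.+1)%N.
  move=> z; rewrite ltnS -hs (bigD1 z) //=; exact: leq_addr.
pose g : {ffun V -> 'I_M.+1} := [ffun z => inord (f z)].
have hg : @config_pred V M g.
  rewrite /config_pred (eq_bigr f) ?hs // => z _.
  by rewrite ffunE inordK.
by exists (exist _ g hg) => z; rewrite /cval /= ffunE inordK.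
Qed.

Lemma sum_ind (V : finType) (x : V) : (\sum_z ((z == x) : nat))%N = 1%N.
Proof. by rewrite (bigD1 x) //= eqxx big1 // => z /negbTE ->. Qed.

Lemma move_exists (V : finType) (M : nat) (a : config V M) x z : (0 < cval a x)%N ->
  exists c : config V M, forall w, (cval c w + (w == x) = cval a w + (w == z))%N.
Proof.
move=> ha.
have hf : forall w, (cval a w + (w == z) - (w == x) + (w == x) = cval a w + (w == z))%N.
  by move=> w; case: (eqVneq w x) => [->|_] /=; lia.
have hs : (\sum_w (cval a w + (w == z) - (w == x)))%N = M.
  have h1 : (\sum_w (cval a w + (w == z) - (w == x) + (w == x)))%N = (M + 1)%N.
    rewrite (eq_bigr (fun w => cval a w + (w == z))%N); last by move=> w _; exact: hf.
    by rewrite big_split /= sum_ind cval_sum.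
  rewrite big_split /= sum_ind in h1; lia.
have [c hc] := cval_exists hs.
by exists c => w; rewrite hc hf.
Qed.

Definition closed_mv (V : finType) (e : rel V) (M : nat) (Q : pred (config V M)) :=
  forall (a b : config V M) (x y : V), e x y -> Q a ->
   (forall z, z != x -> z != y -> cval b z = cval a z) ->
   (cval b x + cval b y = cval a x + cval a y)%N -> Q b.

Lemma path_move (V : finType) (e : rel V) (M : nat) (Q : pred (config V M))
  (hQ : closed_mv e Q) (e_irr : irreflexive e) :
  forall (p : seq V) (x : V) (a b : config V M), path e x p -> Q a -> (0 < cval a x)%N ->
   (forall w, cval b w + (w == x) = cval a w + (w == last x p))%N -> Q b.
Proof.
elim=> [|z p IH] x a b /=.
  move=> _ Qa _ h; have -> : b = a by apply: cval_inj => w; have := h w; lia.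
  done.
move=> /andP[exz pz] Qa ha h.
have [c hc] := move_exists z ha.
have xz : (x == z) = false.
  by apply/negbTE; apply/eqP => xz; subst; rewrite e_irr in exz.
apply: (IH z c b pz).
- apply: (hQ a c x z exz Qa).
  + by move=> w wx wz; have := hc w; rewrite (negbTE wx) (negbTE wz); lia.
  + by have := hc x; have := hc z; rewrite !eqxx xz eq_sym xz; lia.
- by have := hc z; rewrite eqxx eq_sym xz; lia.
- by move=> w; have := hc w; have := h w; lia.
Qed.

Lemma conc_eq (V : finType) (M : nat) (v0 : V) (c0 a : config V M)
  (hc0 : forall w, cval c0 w = if w == v0 then M else 0%N) : cval a v0 = M -> a = c0.
Proof.
move=> h; apply: cval_inj => w; rewrite hc0.
have hs := cval_sum a; rewrite (bigD1 v0) //= h in hs.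
have h0 : (\sum_(i | i != v0) cval a i)%N = 0%N by lia.
case: eqP => [->//|/eqP wv].
by move/eqP: h0; rewrite sum_nat_eq0 => /forall_inP /(_ w wv) /eqP.
Qed.

Lemma reach_conc (V : finType) (e : rel V) (M : nat) (Q : pred (config V M))
  (hQ : closed_mv e Q) (e_irr : irreflexive e) (e_conn : forall x y, connect e x y)
  (v0 : V) (c0 : config V M) (hc0 : forall w, cval c0 w = if w == v0 then M else 0%N) :
  forall a, Q a -> Q c0.
Proof.
move=> a; move: (leqnn (M - cval a v0)%N); move: {2}(M - cval a v0)%N => k.
elim: k a => [|k IH] a hk Qa.
  have ea : a = c0 by apply: (conc_eq hc0); have := cval_le a v0; lia.
  by rewrite -ea.
case: (pickP (fun x => (x != v0) && (0 < cval a x)%N)) => [x /andP[xv ax] | none].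
  have [b hb] := move_exists v0 ax.
  have Qb : Q b.
    have /connectP [p pth lst] := e_conn x v0.
    by apply: (path_move hQ e_irr pth Qa ax) => w; rewrite -lst; exact: hb w.
  apply: (IH b _ Qb).
  have vx : (v0 == x) = false by rewrite eq_sym; exact: negbTE xv.
  by have := hb v0; rewrite eqxx vx; have := cval_le b v0; lia.
have h : cval a v0 = M.
  rewrite -[in RHS](cval_sum a) (bigD1 v0) //= big1 ?addn0 // => w wv.
  by move: (none w); rewrite wv /= => /negbT; rewrite -leqNgt leqn0 => /eqP.
by rewrite -(conc_eq hc0 h).
Qed.

Lemma closedC (V : finType) (e : rel V) (M : nat) (Q : pred (config V M)) :
  closed_mv e Q -> closed_mv e (predC Q).
Proof.
move=> hQ a b x y exy /= nQa hz hs; apply/negP => Qb; move/negP: nQa; apply.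
apply: (hQ b a x y exy Qb); first by move=> z zx zy; rewrite hz.
by rewrite hs.
Qed.

Lemma all_Q (V : finType) (e : rel V) (M : nat) (Q : pred (config V M))
  (hQ : closed_mv e Q) (e_irr : irreflexive e) (e_conn : forall x y, connect e x y)
  (v0 : V) (c0 : config V M) (hc0 : forall w, cval c0 w = if w == v0 then M else 0%N) :
  forall a b, Q a -> Q b.
Proof.
move=> a b Qa; have Qc := reach_conc hQ e_irr e_conn hc0 Qa.
apply/negPn/negP => nQb.
have := reach_conc (closedC hQ) e_irr e_conn hc0 (a := b) nQb.
by rewrite /= Qc.
Qed.
Lemma P_ge0 (R : realFieldType) (V : finType) (e : rel V) (M : nat) (xi eta : config V M) :
  0 <= reshuffle_P R e xi eta.
Proof.
rewrite /reshuffle_P mulr_ge0 ?invr_ge0 ?ler0n // sumr_ge0 // => p _.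
by case: ifP => // _; rewrite invr_ge0 ler0n.
Qed.

Lemma P_pos (R : realFieldType) (V : finType) (e : rel V) (M : nat) (xi eta : config V M) x y :
  e x y -> (forall z, z != x -> z != y -> cval eta z = cval xi z) ->
  (cval eta x + cval eta y = cval xi x + cval xi y)%N -> 0 < reshuffle_P R e xi eta.
Proof.
move=> exy hz hs.
have inE' : (x, y) \in edges e by rewrite /edges inE.
rewrite /reshuffle_P mulr_gt0 //.
  by rewrite invr_gt0 ltr0n; apply/card_gt0P; exists (x, y).
rewrite (bigD1 (x, y)) //= ltr_wpDr //.
  by rewrite sumr_ge0 // => p _; case: ifP => // _; rewrite invr_ge0 ler0n.
have -> : [forall z, ((z != x) && (z != y)) ==> (cval eta z == cval xi z)].
  by apply/forallP => z; apply/implyP => /andP[zx zy]; apply/eqP; exact: hz.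
by rewrite hs eqxx /= invr_gt0 ltr0n.
Qed.

Lemma split2 (V : finType) (x y : V) (F : V -> nat) : x != y ->
  (\sum_w F w = F x + F y + \sum_(w | (w != x) && (w != y)) F w)%N.
Proof. by move=> xy; rewrite (bigD1 x) //= (bigD1 y) 1?eq_sym //= addnA. Qed.

Lemma inner (R : realFieldType) (V : finType) (M : nat) (eta : config V M) (x y : V) :
  x != y ->
  \sum_(xi : config V M)
     (if [forall z : V, ((z != x) && (z != y)) ==> (cval eta z == cval xi z)]
         && (cval eta x + cval eta y == cval xi x + cval xi y)%N
      then ((cval xi x + cval xi y).+1%:R)^-1 else 0) = 1 :> R.
Proof.
move=> xy.
set s := (cval eta x + cval eta y)%N.
set A := [set xi : config V M | [forall z : V, ((z != x) && (z != y)) ==> (cval eta z == cval xi z)]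
         && (s == cval xi x + cval xi y)%N].
have -> : \sum_(xi : config V M)
     (if [forall z : V, ((z != x) && (z != y)) ==> (cval eta z == cval xi z)]
         && (s == cval xi x + cval xi y)%N
      then ((cval xi x + cval xi y).+1%:R)^-1 else 0) =
     \sum_(xi in A) (s.+1%:R)^-1 :> R.
  rewrite [RHS]big_mkcond /=; apply: eq_bigr => xi _; rewrite inE.
  by case: andP => // [[_ /eqP <-]].
rewrite sumr_const.
have -> : #|A| = s.+1.
  pose f (xi : config V M) : 'I_s.+1 := inord (cval xi x).
  have finj : {in A &, injective f}.
    move=> a b; rewrite !inE => /andP[/forallP ha /eqP sa] /andP[/forallP hb /eqP sb] /(congr1 val).
    rewrite /f /= !inordK; try lia.
    move=> abx; apply: cval_inj => z.
    case: (eqVneq z x) => [->//|zx]; case: (eqVneq z y) => [->|zy]; first lia.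
    have := ha z; have := hb z; rewrite zx zy /= => /eqP <- /eqP <- //.
  rewrite -(card_in_imset finj).
  have -> : [set f x | x in A] = [set: 'I_s.+1].
    apply/setP => k; rewrite inE; apply/imsetP.
    pose g w := if w == x then (k : nat) else if w == y then (s - k)%N else cval eta w.
    have hg : (\sum_w g w)%N = M.
      rewrite -(cval_sum eta) (split2 _ xy) (split2 _ xy) /g eqxx [y == x]eq_sym (negbTE xy) eqxx.
      rewrite (eq_bigr (cval eta)); last by move=> w /andP[/negbTE -> /negbTE ->].
      have := ltn_ord k; rewrite /s; lia.
    have [c hc] := cval_exists hg.
    exists c.
      rewrite inE; apply/andP; split.
        apply/forallP => z; apply/implyP => /andP[/negbTE zx /negbTE zy].
        by rewrite hc /g zx zy.
      rewrite !hc /g eqxx [y == x]eq_sym (negbTE xy) eqxx; have := ltn_ord k; lia.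
    by apply: val_inj; rewrite /f /= hc /g eqxx inordK.
  by rewrite cardsT card_ord.
by rewrite -[_ *+ _]mulr_natr mulVf // pnatr_eq0.
Qed.

Lemma colsum (R : realFieldType) (V : finType) (e : rel V) (M : nat) (eta : config V M) :
  irreflexive e -> (0 < #|edges e|)%N ->
  \sum_(xi : config V M) reshuffle_P R e xi eta = 1.
Proof.
move=> e_irr hE.
rewrite /reshuffle_P -mulr_sumr exchange_big /=.
rewrite (eq_bigr (fun _ => 1)); last first.
  case=> x y; rewrite /edges inE /= => exy; apply: inner.
  by apply/eqP => xy; subst; rewrite e_irr in exy.
by rewrite sumr_const mulVf // pnatr_eq0 -lt0n.
Qed.
Theorem lemma2 (R : realFieldType) (V : finType) (e : rel V) (M : nat)
    (e_sym : symmetric e) (e_irr : irreflexive e)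
    (e_conn : forall x y : V, connect e x y)
    (hN : (1 < #|V|)%N) :
  (is_distr R (uniform_distr R (config V M))
   /\ is_stationary R e (uniform_distr R (config V M)))
  /\ forall pi : config V M -> R, is_distr R pi -> is_stationary R e pi ->
       forall xi, pi xi = uniform_distr R (config V M) xi.
Proof.
have [v0 _] : exists v0 : V, true.
  by case/card_gt0P: (ltnW hN) => v0 _; exists v0.
have hE : (0 < #|edges e|)%N.
  have : (0 < #|[predD1 V & v0]|)%N by move: hN; rewrite (cardD1 v0); case: (v0 \in V) => /=; lia.
  case/card_gt0P => w; rewrite inE => /andP[wv _].
  have /connectP [[|z p] pth lst] := e_conn w v0.
    by rewrite /= in lst; rewrite lst eqxx in wv.
  move: pth => /= /andP[ewz _].
  by apply/card_gt0P; exists (w, z); rewrite /edges inE.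
have hs0 : (\sum_w (if w == v0 then M else 0%N))%N = M.
  by rewrite (bigD1 v0) //= eqxx big1 ?addn0 // => w /negbTE ->.
have [c0 hc0] := cval_exists hs0.
have hT : (#|config V M|%:R : R) != 0.
  by rewrite pnatr_eq0 -lt0n; apply/card_gt0P; exists c0.
split.
  split.
    split; first by move=> t; rewrite /uniform_distr invr_ge0 ler0n.
    by rewrite /uniform_distr sumr_const -[_ *+ _]mulr_natr mulVf.
  move=> eta; rewrite /uniform_distr -mulr_sumr colsum // mulr1 //.
move=> pi hd hst xi.
have [xm _ hmax] := @arg_maxP _ _ (config V M) c0 predT pi isT.
set m := pi xm in hmax.
have hcl : closed_mv e [pred a | pi a == m].
  move=> a b x y exy /= /eqP Qa hz hs.
  have hsum : \sum_(c : config V M) (m - pi c) * reshuffle_P R e c a = 0.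
    rewrite (eq_bigr (fun c => m * reshuffle_P R e c a - pi c * reshuffle_P R e c a)); last first.
      by move=> c _; rewrite mulrBl.
    by rewrite sumrB -mulr_sumr colsum // mulr1 hst Qa subrr.
  have hnn : forall c : config V M, true -> 0 <= (m - pi c) * reshuffle_P R e c a.
    move=> c _; rewrite mulr_ge0 ?P_ge0 // subr_ge0; exact: hmax.
  have := psumr_eq0P hnn hsum.
  move=> /(_ b isT).
  have hp : 0 < reshuffle_P R e b a.
    apply: (P_pos _ exy); first by move=> z zx zy; rewrite hz.
    by rewrite hs.
  by move/eqP; rewrite mulf_eq0 (gt_eqF hp) orbF subr_eq0 eq_sym.
have hall : forall a, pi a = m.
  move=> a; apply/eqP; apply: (all_Q hcl e_irr e_conn hc0 (a := xm)) => //=.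
case: hd => _ h1.
rewrite (eq_bigr (fun=> m)) // sumr_const -mulr_natr in h1.
rewrite /uniform_distr hall; apply: (mulIf hT); by rewrite mulVf.
Qed.
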